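(* Let $\alpha,\beta>-1$, $M\ge0$, $a_0,\dots,a_M\in\mathbb{R}$ and $f_M(x)=\sum_{m=0}^M a_mP^{(\alpha,\beta)}_m(x)$. For integers $n\ge-1$ and $y\in[-1,1]$ let $\tilde R_n(y)=\int_{-1}^{y}f_M(y-1-t)P^{(\alpha,\beta)}_n(t)\,\mathrm{d}t$ (so $\tilde R_{-1}\equiv0$). Then for every integer $n\ge0$ and $y\in[-1,1]$, $$\tilde R_{n+1}(y)=\frac{1}{A_{n+1}}\int_{-1}^{y}\tilde R_n(s)\,\mathrm{d}s-\frac{B_n}{A_{n+1}}\tilde R_n(y)-\frac{C_{n-1}}{A_{n+1}}\tilde R_{n-1}(y)+\frac{S_n}{A_{n+1}}\int_{-1}^{y}f_M(t)\,\mathrm{d}t,$$ where $$S_n=\frac{2(-1)^{n+1}(\beta)_{n+1}}{(\alpha+\beta+n)(n+1)!}$$ (and the term $C_{n-1}\tilde R_{n-1}$ is $0$ when $n=0$).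
   Context: Jacobi polynomials: $P^{(\alpha,\beta)}_n(x)=\frac{(\alpha+1)_n}{n!}\,{}_2F_1\!\left(-n,\,n+\alpha+\beta+1;\,\alpha+1;\,\frac{1-x}{2}\right)$ for $n\ge0$, $P^{(\alpha,\beta)}_n:=0$ for $n<0$; $(a)_n=a(a+1)\cdots(a+n-1)$, $(a)_0=1$. The constants are $A_{m}=\dfrac{2(\alpha+\beta+m)}{(\alpha+\beta+2m-1)(\alpha+\beta+2m)}$, $B_m=\dfrac{2(\alpha-\beta)}{(\alpha+\beta+2m)(\alpha+\beta+2m+2)}$, $C_m=-\dfrac{2(\alpha+m+1)(\beta+m+1)}{(\alpha+\beta+m+1)(\alpha+\beta+2m+2)(\alpha+\beta+2m+3)}$; they satisfy $P^{(\alpha,\beta)}_n=A_{n+1}\frac{\mathrm d}{\mathrm dx}P^{(\alpha,\beta)}_{n+1}+B_n\frac{\mathrm d}{\mathrm dx}P^{(\alpha,\beta)}_n+C_{n-1}\frac{\mathrm d}{\mathrm dx}P^{(\alpha,\beta)}_{n-1}$. $\tilde R_n(y)$ is the convolution $\int_{-1}^{x+1}f_M(x-t)P^{(\alpha,\beta)}_n(t)\,\mathrm dt$ at $x=y-1$. *)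

(* Defs.v *)
From Stdlib Require Import Reals ZArith.
From Coquelicot Require Import Coquelicot.
Open Scope R_scope.

Fixpoint poch (a : R) (k : nat) : R :=
  match k with
  | O => 1
  | S k' => poch a k' * (a + INR k')
  end.

(* Jacobi polynomial P^{(al,be)}_n(x) for n >= 0 via the terminating 2F1
   (the series terminates at k = n since (-n)_k = 0 for k > n);
   P_n := 0 for n < 0. *)
Definition jacobi_nat (al be : R) (n : nat) (x : R) : R :=
  poch (al + 1) n / INR (fact n) *
  sum_f_R0 (fun k => poch (- INR n) k * poch (INR n + al + be + 1) k
                      / (poch (al + 1) k * INR (fact k)) * ((1 - x) / 2) ^ k) n.

Definition jacobi (al be : R) (n : Z) (x : R) : R :=
  if (n <? 0)%Z then 0 else jacobi_nat al be (Z.to_nat n) x.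

Definition jacA (al be : R) (m : Z) : R :=
  2 * (al + be + IZR m) / ((al + be + 2 * IZR m - 1) * (al + be + 2 * IZR m)).
Definition jacB (al be : R) (m : Z) : R :=
  2 * (al - be) / ((al + be + 2 * IZR m) * (al + be + 2 * IZR m + 2)).
Definition jacC (al be : R) (m : Z) : R :=
  - (2 * (al + IZR m + 1) * (be + IZR m + 1)) /
    ((al + be + IZR m + 1) * (al + be + 2 * IZR m + 2) * (al + be + 2 * IZR m + 3)).

Definition jacS (al be : R) (n : nat) : R :=
  2 * (-1) ^ (S n) * poch be (S n) / ((al + be + INR n) * INR (fact (S n))).

Definition fM (al be : R) (a : nat -> R) (M : nat) (x : R) : R :=
  sum_f_R0 (fun m => a m * jacobi al be (Z.of_nat m) x) M.

Definition Rtilde (al be : R) (a : nat -> R) (M : nat) (n : Z) (y : R) : R :=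
  RInt (fun t => fM al be a M (y - 1 - t) * jacobi al be n t) (-1) y.

(* Main.v *)
Require Import Defs.
From Stdlib Require Import Reals ZArith Lra Lia.
From Coquelicot Require Import Coquelicot.
Open Scope R_scope.

Lemma poch_Sd a k : poch a (S k) = poch a k * (a + INR k).
Proof. reflexivity. Qed.

Lemma poch_S' a k : poch a (S k) = a * poch (a+1) k.
Proof.
  revert a; induction k as [|k IH]; intro a.
  - simpl. ring.
  - rewrite poch_Sd, IH, poch_Sd, S_INR. ring.
Qed.

Lemma poch_pos c k : 0 < c -> 0 < poch c k.
Proof.
  intro Hc; induction k. simpl; lra.
  rewrite poch_Sd. apply Rmult_lt_0_compat; auto. pose proof (pos_INR k); lra.
Qed.

Lemma poch_negn_zero n k : (n < k)%nat -> poch (- INR n) k = 0.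
Proof.
  induction k as [|k IH]; intro H. lia.
  rewrite poch_Sd. destruct (Nat.eq_dec n k) as [->|Hne].
  - ring.
  - rewrite IH by lia. ring.
Qed.

Lemma poch_m1 a k : poch (a - 1) (S k) = poch a (S k) - INR (S k) * poch a k.
Proof.
  rewrite poch_S'. replace (a - 1 + 1) with a by ring. rewrite poch_Sd, S_INR. ring.
Qed.

Definition vs (n : nat) (b c : R) :=
  sum_f_R0 (fun k => poch (- INR n) k * poch b k / (poch c k * INR (fact k))) n.

Lemma fact_S_INR k : INR (fact (S k)) = INR (S k) * INR (fact k).
Proof. rewrite fact_simpl, mult_INR. reflexivity. Qed.

Lemma fact_nz k : INR (fact k) <> 0.
Proof. apply INR_fact_neq_0. Qed.

Lemma vs_step n b c : 0 < c ->
  vs (S n) b c = vs n b c - b / c * vs n (b+1) (c+1).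
Proof.
  intro Hc. unfold vs.
  rewrite decomp_sum by lia. simpl Init.Nat.pred.
  assert (E : forall k, (k <= n)%nat ->
     poch (- INR (S n)) (S k) * poch b (S k) / (poch c (S k) * INR (fact (S k)))
     = poch (- INR n) (S k) * poch b (S k) / (poch c (S k) * INR (fact (S k)))
       - (poch (- INR n) k * poch (b+1) k / (poch (c+1) k * INR (fact k))) * (b / c)).
  { intros k _. replace (- INR (S n)) with (- INR n - 1) by (rewrite S_INR; ring).
    rewrite poch_m1. rewrite (poch_S' b k), (poch_S' c k), fact_S_INR.
    pose proof (poch_pos (c+1) k ltac:(lra)). pose proof (fact_nz k).
    assert (INR (S k) <> 0) by (rewrite S_INR; pose proof (pos_INR k); lra).
    field. repeat split; auto; lra. }
  rewrite (sum_eq _ _ _ E). rewrite minus_sum.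
  rewrite <- scal_sum.
  set (T := fun k => poch (- INR n) k * poch b k / (poch c k * INR (fact k))).
  assert (H1 : sum_f_R0 T (S n) = sum_f_R0 T n).
  { rewrite tech5. unfold T at 2. rewrite (poch_negn_zero n (S n)) by lia. unfold Rdiv; rewrite !Rmult_0_l, Rplus_0_r; reflexivity. }
  rewrite (decomp_sum T (S n)) in H1 by lia. simpl Init.Nat.pred in H1.
  unfold T in H1. simpl (poch _ 0) in H1. simpl (fact 0) in H1. 
  unfold T; rewrite <- H1. simpl (poch _ 0). simpl (fact 0). simpl (INR 1). field. lra.
Qed.

Lemma vs_closed n : forall b c, 0 < c -> vs n b c = poch (c - b) n / poch c n.
Proof.
  induction n as [|n IH]; intros b c Hc.
  - unfold vs. simpl. field.
  - rewrite vs_step by lra. rewrite !IH by lra.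
    replace (c + 1 - (b + 1)) with (c - b) by ring.
    pose proof (poch_pos c n Hc). pose proof (poch_pos (c+1) n ltac:(lra)).
    assert (Hr : poch c (S n) = c * poch (c+1) n) by apply poch_S'.
    assert (Hr2 : poch c (S n) = poch c n * (c + INR n)) by apply poch_Sd.
    rewrite poch_Sd.
    assert (c + INR n <> 0) by (pose proof (pos_INR n); lra).
    assert (Hq : poch (c+1) n = poch c n * (c + INR n) / c).
    { rewrite <- Hr2, Hr. field. lra. }
    rewrite Hq, Hr2. field. repeat split; lra.
Qed.

Lemma poch_neg n be : poch (- INR n - be) n = (-1)^n * poch (be + 1) n.
Proof.
  induction n as [|n IH].
  - simpl. ring.
  - rewrite poch_S'. replace (- INR (S n) - be + 1) with (- INR n - be) by (rewrite S_INR; ring).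
    rewrite IH, poch_Sd, S_INR. simpl pow. ring.
Qed.

Lemma jac_at_m1 al be n : -1 < al ->
  jacobi_nat al be n (-1) = (-1)^n * poch (be + 1) n / INR (fact n).
Proof.
  intro Ha. unfold jacobi_nat.
  replace ((1 - -1) / 2) with 1 by field.
  assert (E : sum_f_R0 (fun k => poch (- INR n) k * poch (INR n + al + be + 1) k
        / (poch (al + 1) k * INR (fact k)) * 1 ^ k) n = vs n (INR n + al + be + 1) (al + 1)).
  { unfold vs. apply sum_eq. intros. rewrite pow1. ring. }
  rewrite E, vs_closed by lra.
  replace (al + 1 - (INR n + al + be + 1)) with (- INR n - be) by ring.
  rewrite poch_neg. pose proof (poch_pos (al+1) n ltac:(lra)). pose proof (fact_nz n).
  field. lra.
Qed.

Lemma jacobi_nat_eq al be n x : jacobi al be (Z.of_nat n) x = jacobi_nat al be n x.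
Proof.
  unfold jacobi. destruct (Z.ltb_spec (Z.of_nat n) 0). lia. rewrite Nat2Z.id. reflexivity.
Qed.

Lemma jacobi_neg al be x : jacobi al be (-1)%Z x = 0.
Proof. reflexivity. Qed.

Lemma IZR_np1 n : IZR (Z.of_nat n + 1) = INR n + 1.
Proof. rewrite plus_IZR, <- INR_IZR_INZ. reflexivity. Qed.
Lemma IZR_nm1 n : IZR (Z.of_nat n - 1) = INR n - 1.
Proof. rewrite minus_IZR, <- INR_IZR_INZ. reflexivity. Qed.

Lemma K_eq al be n : -1 < al -> -1 < be ->
  al + be + INR n <> 0 -> al + be + INR n + 1 <> 0 ->
  al + be + 2 * INR n <> 0 -> al + be + 2 * INR n + 1 <> 0 ->
  jacA al be (Z.of_nat n + 1) * jacobi al be (Z.of_nat n + 1) (-1)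
  + jacB al be (Z.of_nat n) * jacobi al be (Z.of_nat n) (-1)
  + jacC al be (Z.of_nat n - 1) * jacobi al be (Z.of_nat n - 1) (-1)
  = jacS al be n.
Proof.
  intros Ha Hb H1 H2 H3 H4.
  unfold jacA, jacB, jacC, jacS. rewrite IZR_np1, IZR_nm1.
  rewrite <- INR_IZR_INZ.
  replace (Z.of_nat n + 1)%Z with (Z.of_nat (S n)) by lia.
  rewrite !jacobi_nat_eq, !jac_at_m1 by lra.
  assert (Hp : 0 < al + be + 2 * INR n + 2) by (pose proof (pos_INR n); lra).
  destruct n as [|m].
  - simpl (Z.of_nat 0 - 1)%Z. rewrite jacobi_neg.
    simpl in *. field. lra.
  - replace (Z.of_nat (S m) - 1)%Z with (Z.of_nat m) by lia.
    rewrite jacobi_nat_eq, jac_at_m1 by lra.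
    rewrite <- !tech_pow_Rmult. rewrite (poch_S' be (S m)), !poch_Sd. rewrite !fact_S_INR, !S_INR in *.
    pose proof (fact_nz m). pose proof (pos_INR m).
    field. repeat split; try lra.
Qed.

Definition cf al be n k := poch (al+1) n / INR (fact n) *
  (poch (- INR n) k * poch (INR n + al + be + 1) k / (poch (al + 1) k * INR (fact k))).

Lemma coef_id al be m i : -1 < al -> -1 < be ->
  al + be + INR (S m) <> 0 -> al + be + INR (S m) + 1 <> 0 ->
  al + be + 2 * INR (S m) <> 0 -> al + be + 2 * INR (S m) + 1 <> 0 ->
  jacA al be (Z.of_nat (S m) + 1) * cf al be (S (S m)) (S i)
  + jacB al be (Z.of_nat (S m)) * cf al be (S m) (S i)
  + jacC al be (Z.of_nat (S m) - 1) * cf al be m (S i)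
  + 2 * cf al be (S m) i / INR (S i) = 0.
Proof.
  intros Ha Hb H1 H2 H3 H4.
  unfold jacA, jacB, jacC, cf. rewrite IZR_np1, IZR_nm1, <- INR_IZR_INZ.
  set (a := - INR (S m)).
  set (N := INR (S m) + al + be + 1).
  assert (Ea1 : poch (- INR (S (S m))) (S i) = (a - 1) * poch a i).
  { rewrite poch_S'. replace (- INR (S (S m)) + 1) with a by (unfold a; rewrite (S_INR (S m)); ring).
    replace (- INR (S (S m))) with (a - 1) by (unfold a; rewrite (S_INR (S m)); ring). reflexivity. }
  assert (Ea0 : poch a (S i) = poch a i * (a + INR i)) by apply poch_Sd.
  assert (Ea2 : a * poch (- INR m) (S i) = poch a i * (a + INR i) * (a + INR (S i))).
  { rewrite <- !poch_Sd, (poch_S' a (S i)).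
    replace (a + 1) with (- INR m) by (unfold a; rewrite S_INR; ring). reflexivity. }
  assert (EN1 : N * poch (INR (S (S m)) + al + be + 1) (S i) = poch N i * (N + INR i) * (N + INR (S i))).
  { rewrite <- !poch_Sd, (poch_S' N (S i)).
    replace (N + 1) with (INR (S (S m)) + al + be + 1) by (unfold N; rewrite (S_INR (S m)); ring). reflexivity. }
  assert (EN0 : poch N (S i) = poch N i * (N + INR i)) by apply poch_Sd.
  assert (ENm : poch (INR m + al + be + 1) (S i) = (N - 1) * poch N i).
  { rewrite poch_S'. replace (INR m + al + be + 1 + 1) with N by (unfold N; rewrite (S_INR m); ring).
    replace (INR m + al + be + 1) with (N - 1) by (unfold N; rewrite (S_INR m); ring). reflexivity. }
  fold a N. rewrite Ea1, Ea0, ENm, EN0.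
  assert (Ha0 : a <> 0) by (unfold a; pose proof (pos_INR m); rewrite S_INR; lra).
  assert (HN0 : N <> 0) by (unfold N; pose proof (pos_INR m); rewrite S_INR; lra).
  replace (poch (- INR m) (S i)) with (poch a i * (a + INR i) * (a + INR (S i)) / a)
    by (rewrite <- Ea2; field; auto).
  replace (poch (INR (S (S m)) + al + be + 1) (S i)) with (poch N i * (N + INR i) * (N + INR (S i)) / N)
    by (rewrite <- EN1; field; auto).
  rewrite !poch_Sd. rewrite !fact_S_INR.
  unfold a, N. rewrite !S_INR.
  pose proof (fact_nz m). pose proof (fact_nz i). pose proof (pos_INR m). pose proof (pos_INR i).
  pose proof (poch_pos (al+1) m ltac:(lra)). pose proof (poch_pos (al+1) i ltac:(lra)).
  rewrite S_INR in *.
  field. repeat split; lra.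
Qed.

Lemma is_derive_sum (F dF : nat -> R -> R) N x :
  (forall k, (k <= N)%nat -> is_derive (F k) x (dF k x)) ->
  is_derive (fun y => sum_f_R0 (fun k => F k y) N) x (sum_f_R0 (fun k => dF k x) N).
Proof.
  induction N as [|N IH]; intro H.
  - simpl. apply H. lia.
  - simpl. apply (is_derive_plus (fun y => sum_f_R0 (fun k => F k y) N) (F (S N))).
    + apply IH. intros; apply H; lia.
    + apply H; lia.
Qed.

Definition gsum (a : nat -> R) (e : nat -> nat) N x :=
  sum_f_R0 (fun k => a k * ((1-x)/2)^(e k)) N.

Lemma gsum_derive a e N x :
  is_derive (gsum a e N) x (gsum (fun k => a k * INR (e k) * (-1/2)) (fun k => pred (e k)) N x).
Proof.
  unfold gsum.
  apply (is_derive_sum (fun k y => a k * ((1-y)/2)^(e k))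
          (fun k x => a k * INR (e k) * (-1/2) * ((1-x)/2)^(pred (e k)))).
  intros k _. auto_derive. auto. unfold Rminus, Rdiv. ring.
Qed.

Lemma gsum_cont a e N x : continuous (gsum a e N) x.
Proof. apply (@ex_derive_continuous R_AbsRing R_NormedModule). eexists. apply gsum_derive. Qed.

Lemma jn_gsum al be n x : jacobi_nat al be n x = gsum (cf al be n) (fun k => k) n x.
Proof.
  unfold jacobi_nat, gsum. rewrite scal_sum. apply sum_eq. intros. unfold cf. ring.
Qed.

Lemma jn_derive al be n x : exists d, is_derive (jacobi_nat al be n) x (d x) /\ forall y, continuous d y.
Proof.
  eexists. split.
  - eapply is_derive_ext. intro t. symmetry. apply jn_gsum. apply gsum_derive.
  - intro y. apply gsum_cont.
Qed.

Lemma jn_cont al be n x : continuous (jacobi_nat al be n) x.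
Proof.
  eapply continuous_ext. intro t. symmetry. apply jn_gsum. apply gsum_cont.
Qed.

Definition Iant al be n x :=
  sum_f_R0 (fun k => -2 * cf al be n k / INR (S k) * ((1-x)/2)^(S k)) n.

Lemma Iant_derive al be n x : is_derive (Iant al be n) x (jacobi_nat al be n x).
Proof.
  eapply is_derive_ext. intro t. unfold Iant. reflexivity.
  rewrite jn_gsum. unfold gsum.
  apply (is_derive_sum (fun k y => -2 * cf al be n k / INR (S k) * ((1-y)/2)^(S k))
          (fun k x => cf al be n k * ((1-x)/2)^k)).
  intros k _. auto_derive. auto. 
  assert (INR (S k) <> 0) by (rewrite S_INR; pose proof (pos_INR k); lra).
  change (match k with 0%nat => 1 | S _ => INR k + 1 end) with (INR (S k)). match goal with |- ?a = ?b => change (@eq R a b) end. unfold Rdiv, Rminus. field. auto.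
Qed.

Lemma RInt_jn al be n t : RInt (jacobi_nat al be n) (-1) t = Iant al be n t - Iant al be n (-1).
Proof.
  apply is_RInt_unique. apply (is_RInt_derive (Iant al be n)).
  - intros; apply Iant_derive.
  - intros; apply jn_cont.
Qed.

Lemma sum_extend (F : nat -> R) n N : (forall k, (n < k)%nat -> F k = 0) -> (n <= N)%nat ->
  sum_f_R0 F N = sum_f_R0 F n.
Proof.
  intros HF HN. induction HN. reflexivity.
  simpl. rewrite IHHN, HF by lia. ring.
Qed.

Lemma cf_zero al be n k : (n < k)%nat -> cf al be n k = 0.
Proof. intro H. unfold cf. rewrite poch_negn_zero by auto. unfold Rdiv. ring. Qed.

Definition Phi al be n x :=
  jacA al be (Z.of_nat n + 1) * jacobi al be (Z.of_nat n + 1) x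
  + jacB al be (Z.of_nat n) * jacobi al be (Z.of_nat n) x
  + jacC al be (Z.of_nat n - 1) * jacobi al be (Z.of_nat n - 1) x.

Lemma poly_const0 al be x : -1 < al -> -1 < be -> al + be + 1 <> 0 ->
  Phi al be 0 x - Iant al be 0 x = Phi al be 0 1 - Iant al be 0 1.
Proof.
  intros Ha Hb H1. unfold Phi.
  replace (Z.of_nat 0 + 1)%Z with (Z.of_nat 1) by reflexivity.
  rewrite !jacobi_nat_eq. simpl (Z.of_nat 0 - 1)%Z. rewrite !jacobi_neg.
  unfold jacA, jacobi_nat, Iant, cf. simpl. field. repeat split; lra.
Qed.

Lemma sum_lin4 (f g h d : nat -> R) A B C N :
  A * sum_f_R0 f N + B * sum_f_R0 g N + C * sum_f_R0 h N - sum_f_R0 d N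
  = sum_f_R0 (fun k => A * f k + B * g k + C * h k - d k) N.
Proof. induction N as [|N IH]; simpl. ring. rewrite <- IH. ring. Qed.

Lemma poly_constS al be m x : -1 < al -> -1 < be ->
  al + be + INR (S m) <> 0 -> al + be + INR (S m) + 1 <> 0 ->
  al + be + 2 * INR (S m) <> 0 -> al + be + 2 * INR (S m) + 1 <> 0 ->
  Phi al be (S m) x - Iant al be (S m) x =
  jacA al be (Z.of_nat (S m) + 1) * cf al be (S (S m)) 0
  + jacB al be (Z.of_nat (S m)) * cf al be (S m) 0
  + jacC al be (Z.of_nat (S m) - 1) * cf al be m 0.
Proof.
  intros Ha Hb H1 H2 H3 H4. unfold Phi.
  replace (jacobi al be (Z.of_nat (S m) + 1) x) with (jacobi_nat al be (S (S m)) x)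
    by (replace (Z.of_nat (S m) + 1)%Z with (Z.of_nat (S (S m))) by lia; rewrite jacobi_nat_eq; reflexivity).
  replace (jacobi al be (Z.of_nat (S m) - 1) x) with (jacobi_nat al be m x)
    by (replace (Z.of_nat (S m) - 1)%Z with (Z.of_nat m) by lia; rewrite jacobi_nat_eq; reflexivity).
  rewrite jacobi_nat_eq.
  pose proof (coef_id al be m) as Hc.
  set (A := jacA al be (Z.of_nat (S m) + 1)) in *.
  set (B := jacB al be (Z.of_nat (S m))) in *.
  set (C := jacC al be (Z.of_nat (S m) - 1)) in *.
  rewrite !jn_gsum. unfold gsum.
  rewrite <- (sum_extend (fun k => cf al be (S m) k * ((1-x)/2)^k) (S m) (S (S m)));
    [| intros; rewrite cf_zero by auto; ring | lia].
  rewrite <- (sum_extend (fun k => cf al be m k * ((1-x)/2)^k) m (S (S m)));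
    [| intros; rewrite cf_zero by auto; ring | lia].
  set (dd := fun k => match k with 0%nat => 0 | S j => -2 * cf al be (S m) j / INR (S j) end).
  assert (HI : Iant al be (S m) x = sum_f_R0 (fun k => dd k * ((1-x)/2)^k) (S (S m))).
  { rewrite decomp_sum by lia. simpl pred. unfold Iant, dd. simpl (0 * _). rewrite Rmult_0_l, Rplus_0_l.
    apply sum_eq. intros; reflexivity. }
  rewrite HI, sum_lin4.
  rewrite decomp_sum by lia. simpl pred.
  rewrite (sum_eq _ (fun _ => 0)).
  - rewrite sum_cte. unfold dd. simpl. ring.
  - intros i _. unfold dd.
    specialize (Hc i Ha Hb H1 H2 H3 H4).
    replace (A * (cf al be (S (S m)) (S i) * ((1 - x) / 2) ^ S i) +
      B * (cf al be (S m) (S i) * ((1 - x) / 2) ^ S i) +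
      C * (cf al be m (S i) * ((1 - x) / 2) ^ S i) -
      -2 * cf al be (S m) i / INR (S i) * ((1 - x) / 2) ^ S i)
    with ((A * cf al be (S (S m)) (S i) + B * cf al be (S m) (S i) + C * cf al be m (S i)
           + 2 * cf al be (S m) i / INR (S i)) * ((1 - x) / 2) ^ S i) by (unfold Rdiv; ring).
    rewrite Hc. ring.
Qed.

Lemma poly_const al be n x y : -1 < al -> -1 < be ->
  al + be + INR n <> 0 -> al + be + INR n + 1 <> 0 ->
  al + be + 2 * INR n <> 0 -> al + be + 2 * INR n + 1 <> 0 ->
  Phi al be n x - Iant al be n x = Phi al be n y - Iant al be n y.
Proof.
  intros Ha Hb H1 H2 H3 H4. destruct n as [|m].
  - rewrite (poly_const0 al be x), (poly_const0 al be y); auto; simpl in H2; lra.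
  - rewrite (poly_constS al be m x), (poly_constS al be m y); auto.
Qed.

Lemma jac_int al be n t : -1 < al -> -1 < be ->
  al + be + INR n <> 0 -> al + be + INR n + 1 <> 0 ->
  al + be + 2 * INR n <> 0 -> al + be + 2 * INR n + 1 <> 0 ->
  Phi al be n t = RInt (jacobi_nat al be n) (-1) t + jacS al be n.
Proof.
  intros. rewrite RInt_jn. rewrite <- K_eq by auto. fold (Phi al be n (-1)).
  pose proof (poly_const al be n t (-1)). lra.
Qed.

Lemma cont_mult (f h : R -> R) x : continuous f x -> continuous h x ->
  continuous (fun t => f t * h t) x.
Proof. intros; apply (@continuous_mult R_UniformSpace R_AbsRing); auto. Qed.

Lemma cont_aff (c d : R) x : continuous (fun t => c + d * t) x.
Proof. apply (@ex_derive_continuous R_AbsRing R_NormedModule). auto_derive. auto. Qed.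

Lemma cont_comp_aff (g : R -> R) c d x : (forall z, continuous g z) ->
  continuous (fun t => g (c + d * t)) x.
Proof.
  intro Hg. apply (continuous_comp (fun t => c + d * t) g). apply cont_aff. apply Hg.
Qed.

Lemma cont_refl (g : R -> R) x : (forall z, continuous g z) -> continuous (fun t => g (x - 1 - t)) = continuous (fun t => g (x - 1 - t)).
Proof. reflexivity. Qed.

Lemma cont_shift (g : R -> R) y x : (forall z, continuous g z) -> continuous (fun t => g (y - 1 - t)) x.
Proof.
  intro Hg. eapply continuous_ext. 2: apply (cont_comp_aff g (y-1) (-1) x Hg).
  intro t. simpl. f_equal. ring.
Qed.

Definition conv' (g k : R -> R) y := RInt (fun s => g s * k (y - 1 - s)) (-1) y.

Lemma exRInt_conv (g k : R -> R) y a b : (forall z, continuous g z) -> (forall z, continuous k z) ->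
  ex_RInt (fun s => g s * k (y - 1 - s)) a b.
Proof.
  intros Hg Hk. apply (@ex_RInt_continuous R_CompleteNormedModule). intros z _. apply cont_mult. apply Hg. apply cont_shift; auto.
Qed.

Lemma conv_sub (g k : R -> R) y : (forall z, continuous g z) -> (forall z, continuous k z) ->
  RInt (fun t => g (y - 1 - t) * k t) (-1) y = conv' g k y.
Proof.
  intros Hg Hk. unfold conv'.
  assert (Hex : ex_RInt (fun t => g (y - 1 - t) * k t) (-1 * -1 + (y - 1)) (-1 * y + (y - 1))).
  { apply (@ex_RInt_continuous R_CompleteNormedModule). intros z _. apply cont_mult. apply cont_shift; auto. apply Hk. }
  pose proof (RInt_comp_lin (fun t => g (y - 1 - t) * k t) (-1) (y-1) (-1) y Hex) as E.
  replace (-1 * -1 + (y - 1)) with y in E by ring.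
  replace (-1 * y + (y - 1)) with (-1) in E by ring.
  rewrite <- (opp_RInt_swap (fun t => g (y - 1 - t) * k t) (-1) y) in E.
  2: { apply (@ex_RInt_continuous R_CompleteNormedModule). intros z _. apply cont_mult. apply cont_shift; auto. apply Hk. }
  assert (E2 : RInt (fun s => scal (-1) (g (y - 1 - (-1 * s + (y - 1))) * k (-1 * s + (y - 1)))) (-1) y
             = opp (RInt (fun s => g s * k (y - 1 - s)) (-1) y)).
  { rewrite <- RInt_opp. apply RInt_ext. intros s _.
    replace (y - 1 - (-1 * s + (y - 1))) with s by ring.
    replace (-1 * s + (y - 1)) with (y - 1 - s) by ring.
    change (-1 * (g s * k (y - 1 - s)) = - (g s * k (y - 1 - s))). ring.
    apply exRInt_conv; auto. }
  assert (E3 : opp (RInt (fun t => g (y - 1 - t) * k t) (-1) y) = opp (RInt (fun s => g s * k (y - 1 - s)) (-1) y)).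
  { rewrite <- E, <- E2. reflexivity. }
  apply (f_equal opp) in E3. rewrite !opp_opp in E3. exact E3.
Qed.

Lemma deriv_conv (g Q q : R -> R) y : (forall z, continuous g z) ->
  (forall z, is_derive Q z (q z)) -> (forall z, continuous q z) ->
  is_derive (conv' g Q) y (conv' g q y + g y * Q (-1)).
Proof.
  intros Hg HQ Hq.
  assert (HQc : forall z, continuous Q z).
  { intro z. apply (@ex_derive_continuous R_AbsRing R_NormedModule). eexists. apply HQ. }
  set (f := fun u s => g s * Q (u - 1 - s)).
  assert (Hd : forall u s, is_derive (fun z => f z s) u (g s * q (u - 1 - s))).
  { intros u s. unfold f.
    apply (is_derive_scal (fun z => Q (z - 1 - s)) u (g s)).
    eapply is_derive_ext. intro t. reflexivity.
    pose proof (is_derive_comp Q (fun z => z - 1 - s) u (q (u - 1 - s)) 1 (HQ _)) as H.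
    assert (H1 : is_derive (fun z : R => z - 1 - s) u 1).
    { auto_derive. auto. ring. }
    specialize (H H1). change (scal 1 (q (u - 1 - s))) with (1 * q (u - 1 - s)) in H. rewrite Rmult_1_l in H. eapply is_derive_ext. 2: eapply H. intro t; reflexivity.
  }
  assert (HD : forall u s, Derive (fun z => f z s) u = g s * q (u - 1 - s)).
  { intros; apply is_derive_unique, Hd. }
  assert (H2d : forall u0 v0, continuity_2d_pt (fun u v => Derive (fun z => f z v) u) u0 v0).
  { intros u0 v0.
    apply continuity_2d_pt_ext with (f := fun u v => g v * q (u - 1 - v)).
    { intros; symmetry; apply HD. }
    apply continuity_2d_pt_mult.
    - apply (continuity_1d_2d_pt_comp g (fun _ v => v)).
      apply continuity_pt_filterlim, Hg. apply continuity_2d_pt_id2.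
    - apply (continuity_1d_2d_pt_comp q (fun u v => u - 1 - v)).
      apply continuity_pt_filterlim, Hq.
      apply continuity_2d_pt_minus. apply continuity_2d_pt_minus.
      apply continuity_2d_pt_id1. apply continuity_2d_pt_const. apply continuity_2d_pt_id2. }
  assert (HexR : forall y0 a b, ex_RInt (fun t => f y0 t) a b).
  { intros. unfold f. apply exRInt_conv; auto. }
  pose proof (is_derive_RInt_param_bound_comp_aux3 f (-1) (fun x => x) y 1) as P.
  assert (P' : is_derive (fun x0 => RInt (fun t => f x0 t) (-1) x0) y
     (RInt (fun t => Derive (fun u => f u t) y) (-1) y + f y y * 1)).
  { apply P.
    - apply filter_forall. intros; apply HexR.
    - exists (mkposreal 1 Rlt_0_1). apply filter_forall. intros; apply HexR.
    - exact (@is_derive_id R_AbsRing y).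
    - exists (mkposreal 1 Rlt_0_1). apply filter_forall. intros x0 t _. eexists. apply Hd.
    - intros; apply H2d.
    - exists (mkposreal 1 Rlt_0_1). intros; apply H2d.
    - apply continuity_pt_filterlim. change (continuous (fun t => g t * Q (y - 1 - t)) y). apply cont_mult; [apply Hg | apply cont_shift; auto]. }
  replace (conv' g q y + g y * Q (-1)) with
     (RInt (fun t => Derive (fun u => f u t) y) (-1) y + f y y * 1).
  - exact P'.
  - unfold conv', f. rewrite Rmult_1_r. replace (y - 1 - y) with (-1) by ring. f_equal.
    apply RInt_ext. intros; apply HD.
Qed.

Lemma conv_cont (g Q q : R -> R) y : (forall z, continuous g z) ->
  (forall z, is_derive Q z (q z)) -> (forall z, continuous q z) ->
  continuous (conv' g Q) y.
Proof.
  intros. apply (@ex_derive_continuous R_AbsRing R_NormedModule). eexists. apply deriv_conv; auto.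
Qed.

Lemma conv_int (g h Q : R -> R) y : (forall z, continuous g z) ->
  (forall z, is_derive Q z (h z)) -> (forall z, continuous h z) -> Q (-1) = 0 ->
  (forall z, continuous (conv' g h) z) ->
  RInt (conv' g h) (-1) y = conv' g Q y.
Proof.
  intros Hg HQ Hh HQ0 Hc.
  apply is_RInt_unique.
  replace (conv' g Q y) with (minus (conv' g Q y) (conv' g Q (-1))).
  - apply (is_RInt_derive (conv' g Q) (conv' g h)).
    + intros x _. replace (conv' g h x) with (conv' g h x + g x * Q (-1)) by (rewrite HQ0; ring).
      apply deriv_conv; auto.
    + intros; apply Hc.
  - unfold conv' at 2. rewrite RInt_point. change (conv' g Q y - 0 = conv' g Q y). ring.
Qed.

Lemma isR_lin2 (f1 f2 : R -> R) c1 c2 a b I1 I2 : is_RInt f1 a b I1 -> is_RInt f2 a b I2 ->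
  is_RInt (fun s => c1 * f1 s + c2 * f2 s) a b (c1 * I1 + c2 * I2).
Proof.
  intros H1 H2.
  pose proof (@is_RInt_scal R_NormedModule f1 a b c1 I1 H1) as J1.
  pose proof (@is_RInt_scal R_NormedModule f2 a b c2 I2 H2) as J2.
  exact (@is_RInt_plus R_NormedModule _ _ a b _ _ J1 J2).
Qed.
Lemma RInt_lin4 (f1 f2 f3 f4 : R -> R) c1 c2 c3 c4 a b :
  ex_RInt f1 a b -> ex_RInt f2 a b -> ex_RInt f3 a b -> ex_RInt f4 a b ->
  RInt (fun s => c1 * f1 s - c2 * f2 s - c3 * f3 s + c4 * f4 s) a b
  = c1 * RInt f1 a b - c2 * RInt f2 a b - c3 * RInt f3 a b + c4 * RInt f4 a b.
Proof.
  intros H1 H2 H3 H4. apply is_RInt_unique.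
  apply (@RInt_correct R_CompleteNormedModule) in H1. apply (@RInt_correct R_CompleteNormedModule) in H2. apply (@RInt_correct R_CompleteNormedModule) in H3. apply (@RInt_correct R_CompleteNormedModule) in H4.
  pose proof (isR_lin2 _ _ c1 (-c2) _ _ _ _ H1 H2) as J.
  pose proof (isR_lin2 _ _ 1 (-c3) _ _ _ _ J H3) as J'.
  pose proof (isR_lin2 _ _ 1 c4 _ _ _ _ J' H4) as J''.
  replace (c1 * RInt f1 a b - c2 * RInt f2 a b - c3 * RInt f3 a b + c4 * RInt f4 a b)
    with (1 * (1 * (c1 * RInt f1 a b + - c2 * RInt f2 a b) + - c3 * RInt f3 a b) + c4 * RInt f4 a b) by ring.
  eapply is_RInt_ext. 2: exact J''. intros x _. simpl. ring.
Qed.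

Lemma cont_sum (F : nat -> R -> R) N x : (forall k, continuous (F k) x) ->
  continuous (fun y => sum_f_R0 (fun k => F k y) N) x.
Proof.
  intro H. induction N as [|N IH]; simpl. apply H.
  apply (@continuous_plus R_UniformSpace R_AbsRing R_NormedModule (fun y => sum_f_R0 (fun k => F k y) N) (F (S N))); auto.
Qed.

Lemma jac_cont al be z x : continuous (jacobi al be z) x.
Proof.
  unfold jacobi. destruct (z <? 0)%Z.
  - apply continuous_const.
  - apply jn_cont.
Qed.

Lemma fM_cont al be a M x : continuous (fM al be a M) x.
Proof.
  unfold fM. apply (cont_sum (fun k y => a k * jacobi al be (Z.of_nat k) y)).
  intro k. apply cont_mult. apply continuous_const. apply jac_cont.
Qed.

Lemma jn_deriv_glob al be n : exists d, (forall x, is_derive (jacobi_nat al be n) x (d x)) /\ forall y, continuous d y.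
Proof.
  eexists. split.
  - intro x. eapply is_derive_ext. intro t. symmetry. apply jn_gsum. apply gsum_derive.
  - intro y. apply gsum_cont.
Qed.

Theorem theorem4p6 (al be : R) (M : nat) (a : nat -> R) (n : nat) (y : R) :
  -1 < al -> -1 < be ->
  al + be + INR n <> 0 -> al + be + INR n + 1 <> 0 ->
  al + be + 2 * INR n <> 0 -> al + be + 2 * INR n + 1 <> 0 ->
  -1 <= y <= 1 ->
  Rtilde al be a M (Z.of_nat n + 1) y =
    1 / jacA al be (Z.of_nat n + 1) * RInt (fun s => Rtilde al be a M (Z.of_nat n) s) (-1) y
    - jacB al be (Z.of_nat n) / jacA al be (Z.of_nat n + 1) * Rtilde al be a M (Z.of_nat n) y
    - jacC al be (Z.of_nat n - 1) / jacA al be (Z.of_nat n + 1)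
        * Rtilde al be a M (Z.of_nat n - 1) y
    + jacS al be n / jacA al be (Z.of_nat n + 1) * RInt (fM al be a M) (-1) y.
Proof.
  intros Ha Hb H1 H2 H3 H4 _.
  set (g := fM al be a M).
  assert (Hg : forall z, continuous g z) by (intro; apply fM_cont).
  destruct (jn_deriv_glob al be n) as [dn [Hdn Hdnc]].
  set (Q := fun t => Iant al be n t - Iant al be n (-1)).
  assert (HQd : forall z, is_derive Q z (jacobi_nat al be n z)).
  { intro z. unfold Q. replace (jacobi_nat al be n z) with (jacobi_nat al be n z - 0) by ring.
    apply (@is_derive_minus R_AbsRing R_NormedModule). apply Iant_derive. exact (@is_derive_const R_AbsRing R_NormedModule (Iant al be n (-1)) z). }
  assert (HQc : forall z, continuous Q z).
  { intro z. apply (@ex_derive_continuous R_AbsRing R_NormedModule). eexists. apply HQd. }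
  assert (HQ0 : Q (-1) = 0) by (unfold Q; ring).
  set (A := jacA al be (Z.of_nat n + 1)).
  set (B := jacB al be (Z.of_nat n)).
  set (C := jacC al be (Z.of_nat n - 1)).
  set (S := jacS al be n).
  assert (HA : A <> 0).
  { unfold A, jacA. rewrite IZR_np1. pose proof (pos_INR n).
    assert (al + be + 2 * (INR n + 1) - 1 <> 0) by lra.
    assert (al + be + 2 * (INR n + 1) <> 0) by lra.
    unfold Rdiv. apply Rmult_integral_contrapositive_currified. lra.
    apply Rinv_neq_0_compat. apply Rmult_integral_contrapositive_currified; auto. }
  assert (Hjac : forall t, jacobi al be (Z.of_nat n + 1) t =
     1 / A * Q t - B / A * jacobi_nat al be n t - C / A * jacobi al be (Z.of_nat n - 1) t + S / A * 1).
  { intro t. pose proof (jac_int al be n t Ha Hb H1 H2 H3 H4) as J.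
    rewrite RInt_jn in J. unfold Phi in J. fold A B C S in J. rewrite jacobi_nat_eq in J.
    unfold Q. field_simplify; auto. apply (Rmult_eq_reg_l A); auto. field_simplify; auto. lra. }
  unfold Rtilde. fold g.
  rewrite (conv_sub g (jacobi al be (Z.of_nat n + 1)) y Hg (jac_cont al be _)).
  rewrite (conv_sub g (jacobi al be (Z.of_nat n)) y Hg (jac_cont al be _)).
  rewrite (conv_sub g (jacobi al be (Z.of_nat n - 1)) y Hg (jac_cont al be _)).
  rewrite (RInt_ext (fun s => RInt (fun t => g (s - 1 - t) * jacobi al be (Z.of_nat n) t) (-1) s)
     (conv' g (jacobi_nat al be n))).
  2: { intros s _. rewrite conv_sub; [| auto | apply jac_cont].
       unfold conv'. apply RInt_ext. intros; rewrite jacobi_nat_eq; reflexivity. }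
  rewrite (conv_int g (jacobi_nat al be n) Q y Hg HQd (jn_cont al be n) HQ0
               (fun z => conv_cont g _ dn z Hg Hdn Hdnc)).
  assert (L : conv' g (jacobi al be (Z.of_nat n + 1)) y =
    RInt (fun s => 1 / A * (g s * Q (y - 1 - s)) - B / A * (g s * jacobi_nat al be n (y - 1 - s))
       - C / A * (g s * jacobi al be (Z.of_nat n - 1) (y - 1 - s)) + S / A * g s) (-1) y).
  { unfold conv'. apply RInt_ext. intros. rewrite Hjac. match goal with |- ?a = ?b => change (@eq R a b) end. ring. }
  rewrite L, RInt_lin4.
  - unfold conv'.
    rewrite (RInt_ext (fun s => g s * jacobi al be (Z.of_nat n) (y - 1 - s))
               (fun s => g s * jacobi_nat al be n (y - 1 - s))) by (intros; rewrite jacobi_nat_eq; reflexivity).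
    reflexivity.
  - apply exRInt_conv; auto.
  - apply exRInt_conv; auto. apply jn_cont.
  - apply exRInt_conv; auto. apply jac_cont.
  - apply (@ex_RInt_continuous R_CompleteNormedModule). intros; apply Hg.
Qed.
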